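(* Let $G=(V,E)$ be a connected simple graph with a set-valued metric $\Omega(-,-)$ taking values in subsets of a finite set $\Omega$, and suppose there is an equivariant involution $x\mapsto -x$ on $V$. Then the diameter of $G$ is at least $|\Omega|$.
   Context: For a connected simple graph $G=(V,E)$ and a set $\Omega$, a set-valued metric on $G$ is a function $\Omega(-,-):V\times V\to 2^{\Omega}$ such that $\Omega(x,y)=\Omega(y,x)$ for all $x,y$; $|\Omega(x,y)|=1$ whenever $\{x,y\}\in E$; and $\Omega(x,z)=\Omega(x,y)\triangle\Omega(y,z)$ for all $x,y,z$, where $\triangle$ is symmetric difference. An involution $x\mapsto -x$ on $V$ is equivariant if $\Omega(x,-y)=\Omega\setminus\Omega(x,y)$ for all $x,y\in V$. *)

(* Defs.v *)
From mathcomp Require Import all_boot.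
Set Implicit Arguments. Unset Strict Implicit. Unset Printing Implicit Defensive.

Definition simple_graph (V : Type) (adj : V -> V -> Prop) : Prop :=
  (forall x y, adj x y -> adj y x) /\ (forall x, ~ adj x x).

Inductive walk (V : Type) (adj : V -> V -> Prop) : V -> V -> nat -> Prop :=
  | walk_nil x : walk adj x x 0
  | walk_cons x y z n : adj x y -> walk adj y z n -> walk adj x z n.+1.

Definition connected_graph (V : Type) (adj : V -> V -> Prop) : Prop :=
  inhabited V /\ forall x y, exists n, walk adj x y n.

Definition dist_ge (V : Type) (adj : V -> V -> Prop) (x y : V) (k : nat) : Prop :=
  forall n, walk adj x y n -> k <= n.

Definition diameter_ge (V : Type) (adj : V -> V -> Prop) (k : nat) : Prop :=
  exists x y, dist_ge adj x y k.

Definition symdiff (T : finType) (A B : {set T}) : {set T} :=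
  (A :\: B) :|: (B :\: A).

Definition set_valued_metric (V : Type) (adj : V -> V -> Prop) (Om : finType)
    (d : V -> V -> {set Om}) : Prop :=
  [/\ forall x y, d x y = d y x,
      forall x y, adj x y -> #|d x y| = 1
    & forall x y z, d x z = symdiff (d x y) (d y z)].

Definition equivariant_involution (V : Type) (Om : finType)
    (d : V -> V -> {set Om}) (neg : V -> V) : Prop :=
  (forall x, neg (neg x) = x) /\ (forall x y, d x (neg y) = ~: d x y).

(* Main.v *)
Require Import Defs.
From mathcomp Require Import all_boot.

Lemma card_symdiff_le (T : finType) (A B : {set T}) : #|symdiff A B| <= #|A| + #|B|.
Proof.
apply: leq_trans (leq_card_setU A B).
apply: subset_leq_card; apply/subsetP => z; rewrite /symdiff !inE.
by case: (z \in A); case: (z \in B).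
Qed.

Lemma walk_card (V : Type) (adj : V -> V -> Prop) (Om : finType)
    (d : V -> V -> {set Om}) :
  set_valued_metric adj d -> forall a b n, walk adj a b n -> #|d a b| <= n.
Proof.
case=> _ H1 H2 a b n w; elim: w => {a b n} [x|x y z n Hxy _ IH].
  have := H2 x x x; rewrite /symdiff setDv setU0 => E.
  have -> : d x x = set0.
    apply/setP=> u; rewrite inE; apply/negbTE/negP=> Hu.
    by move/setP/(_ u): E; rewrite !inE Hu.
  by rewrite cards0.
rewrite (H2 x y z); have Hc := @card_symdiff_le _ (d x y) (d y z); apply: (leq_trans Hc).
by rewrite (H1 _ _ Hxy) add1n ltnS.
Qed.

Theorem proposition3p8 (V : Type) (adj : V -> V -> Prop) (Om : finType)
    (d : V -> V -> {set Om}) (neg : V -> V) :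
  simple_graph adj -> connected_graph adj ->
  set_valued_metric adj d -> equivariant_involution d neg ->
  diameter_ge adj #|Om|.
Proof.
move=> _ [[x] _] Hm [_ Hn].
exists x, (neg x) => n w.
have := @walk_card _ _ _ _ Hm _ _ _ w; rewrite Hn.
case: Hm => _ _ H2.
have := H2 x x x; rewrite /symdiff setDv setU0 => E.
have -> : d x x = set0.
  apply/setP=> u; rewrite inE; apply/negbTE/negP=> Hu.
  by move/setP/(_ u): E; rewrite !inE Hu.
by rewrite setC0 cardsT.
Qed.
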